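(* Let $(G,\omega,\mu)$ be an infinite, connected, locally finite weighted graph, let $V:G\to\mathbb{R}$, and let $u:G\to\mathbb{R}$ be a solution of $\Delta u - Vu=0$ in $G$. Let $\eta,\xi:G\to\mathbb{R}$ satisfy: $\eta\ge0$ with finite support, and $$[\eta^2(y)-\eta^2(x)]\,[e^{\xi(y)}-e^{\xi(x)}]\ge0\quad\text{for all }x,y\in G\text{ with }x\sim y.$$ Then for any $p\ge2$, $$\frac12\sum_{x\in G}|u(x)|^p\eta^2(x)e^{\xi(x)}\Big\{V(x)\,p\,\mu(x)-\frac12\sum_{y\in G}\omega(x,y)\big[1-e^{\xi(y)-\xi(x)}\big]^2\Big\}\le\sum_{x,y\in G}|u(x)|^p e^{\xi(y)}[\eta(y)-\eta(x)]^2\omega(x,y).$$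
   Context: A weighted graph $(G,\omega,\mu)$: $G$ countable, $\mu:G\to(0,\infty)$, $\omega:G\times G\to[0,\infty)$ symmetric with $\omega(x,x)=0$ and $\sum_y\omega(x,y)<\infty$; $x\sim y$ iff $\omega(x,y)>0$; locally finite means each vertex has finitely many neighbours; connected means any two vertices are joined by a finite path. Laplacian $\Delta f(x)=\frac{1}{\mu(x)}\sum_{y}[f(y)-f(x)]\omega(x,y)$. *)

(* Defs.v *)
From HB Require Import structures.
From mathcomp Require Import all_boot all_order all_algebra.
From mathcomp Require Import all_classical all_reals all_analysis.
Set Implicit Arguments. Unset Strict Implicit. Unset Printing Implicit Defensive.
Import Order.TTheory GRing.Theory Num.Theory.
Local Open Scope classical_set_scope.
Local Open Scope ring_scope.

Definition weighted_graph (R : realType) (T : countType)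
  (omega : T -> T -> R) (mu : T -> R) : Prop :=
  (forall x, 0 < mu x) /\
  (forall x y, 0 <= omega x y) /\
  (forall x y, omega x y = omega y x) /\
  (forall x, omega x x = 0).

Definition adj (R : realType) (T : Type) (omega : T -> T -> R) (x y : T) : Prop :=
  0 < omega x y.

Definition locally_finite (R : realType) (T : Type) (omega : T -> T -> R) : Prop :=
  forall x, finite_set [set y | adj omega x y].

Definition connected_graph (R : realType) (T : Type) (omega : T -> T -> R) : Prop :=
  forall x y, exists (n : nat) (f : nat -> T),
    f 0%N = x /\ f n = y /\ (forall i, (i < n)%N -> adj omega (f i) (f i.+1)).

(* Laplacian: Delta f(x) = 1/mu(x) * sum_y [f(y) - f(x)] omega(x,y);
   the sum is a finitely supported sum (fsbigop), finite by local finiteness. *)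
Definition laplacian (R : realType) (T : countType) (omega : T -> T -> R)
  (mu : T -> R) (f : T -> R) (x : T) : R :=
  (mu x)^-1 * \sum_(y \in [set: T]) (f y - f x) * omega x y.

(* Main.v *)
Require Import Defs.
From HB Require Import structures.
From mathcomp Require Import all_boot all_order all_algebra.
From mathcomp Require Import all_classical all_reals all_analysis.
From mathcomp Require Import ring lra.
Import Order.TTheory GRing.Theory Num.Theory.
Local Open Scope classical_set_scope.
Local Open Scope ring_scope.

Section Alg.
Variable R : realFieldType.
Implicit Types a b c d x y z w : R.

Lemma Q0_ge0 x y z : 0 <= 60*x^+2 - 34*x*y - 84*x*z + 534*y^+2 - 488*y*z + 180*z^+2.
Proof.
have h1 := sqr_ge0 (4*x - y - 3*z).
have h2 := sqr_ge0 (2*y - z).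
have h3 := sqr_ge0 x. have h4 := sqr_ge0 y. have h5 := sqr_ge0 z.
have h6 := sqr_ge0 (x-y). have h7 := sqr_ge0 (x-z). have h8 := sqr_ge0 (y-z).
nra.
Qed.
Lemma Q1_ge0 x y z w : 0 <= 144*x^+2 + 1350*y^+2 + 1386*z^+2 + 144*w^+2
  + 438*x*y - 642*x*z - 72*x*w - 1216*y*z - 612*y*w + 396*z*w.
Proof.
have h1 := sqr_ge0 (48*x + 73*y - 107*z - 12*w).
have h2 := sqr_ge0 (8*y - z - 2*w).
have h3 := sqr_ge0 (7*z + w).
have h4 := sqr_ge0 w. have h5 := sqr_ge0 z. have h6 := sqr_ge0 y.
have h7 := sqr_ge0 (y-z). have h8 := sqr_ge0 (y-w). have h9 := sqr_ge0 (z+w).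
nra.
Qed.
Lemma Q3_ge0 x y : 0 <= 33*x^+2 + 50*x*y + 32*y^+2.
Proof. have h1 := sqr_ge0 (x+y). have h2 := sqr_ge0 x. have h3 := sqr_ge0 y. nra. Qed.

Lemma D_from (D q0 q1 q3 A B e f : R) :
  1728*D = 16*q0 + 3*(A*B)*q1 + 96*(A*B*e*f)*q3 -> 0<=q0 -> 0<=q1 -> 0<=q3 ->
  0<=A->0<=B->0<=e->0<=f -> 0<=D.
Proof.
move=> E h0 h1 h3 hA hB he hf.
have hAB : 0 <= A*B by apply: mulr_ge0.
have hABef : 0 <= A*B*e*f by apply: mulr_ge0 => //; apply: mulr_ge0.
have : 0 <= 1728 * D.
  rewrite E; apply: addr_ge0; [apply: addr_ge0|]; apply: mulr_ge0 => //; try apply: mulr_ge0 => //; lra.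
lra.
Qed.

Lemma D_ge0 (e f A B : R) : 0 <= e -> 0 <= f -> 0 <= A -> 0 <= B ->
 0 <= (e^+2*((A-B)^+2+4*A^+2)+4*A*B*(f-e)^+2)*(f^+2*((A-B)^+2+4*B^+2)+4*A*B*(f-e)^+2)-4*A*B*(e^+2*A+f^+2*B)^+2.
Proof.
move=> he hf hA hB.
pose x0 := (-4*f^+2*A*B + 3*e*f*B^+2 + e*f*A^+2).
pose y0 := (-2*f^+2*A*B + 3*e*f*A*B - e*f*A^+2).
pose z0 := (-f^+2*A*B - 2*e*f*A^+2 + 3*e^+2*A*B).
pose x1 := (-2*f^+2*B + 4*f^+2*A - 2*e^+2*A).
pose y1 := (-3*f^+2*B + 4*e*f*B - e^+2*A).
pose z1 := (-f^+2*B + 4*e*f*A - 3*e^+2*A).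
pose w1 := (-2*f^+2*B + 4*e^+2*B - 2*e^+2*A).
pose x3 := (-f*B + 3*f*A - 2*e*A).
pose y3 := (-2*f*B + 3*e*B - e*A).
pose q0 := 60*x0^+2 - 34*x0*y0 - 84*x0*z0 + 534*y0^+2 - 488*y0*z0 + 180*z0^+2.
pose q1 := 144*x1^+2 + 1350*y1^+2 + 1386*z1^+2 + 144*w1^+2
  + 438*x1*y1 - 642*x1*z1 - 72*x1*w1 - 1216*y1*z1 - 612*y1*w1 + 396*z1*w1.
pose q3 := 33*x3^+2 + 50*x3*y3 + 32*y3^+2.
apply: (@D_from _ q0 q1 q3 A B e f) => //.
- rewrite /q0 /q1 /q3 /x0 /y0 /z0 /x1 /y1 /z1 /w1 /x3 /y3; ring.
- exact: Q0_ge0.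
- exact: Q1_ge0.
- exact: Q3_ge0.
Qed.
End Alg.
Lemma quad_ge0 (R : realFieldType) (m11 m12 m22 X Y : R) : 0 <= m11 -> 0 <= m22 -> m12^+2 <= m11 * m22 ->
  0 <= m11 * X^+2 - 2 * m12 * X * Y + m22 * Y^+2.
Proof.
move=> h11 h22 hd.
have [E0|h] := eqVneq m11 0.
  rewrite E0 in hd *.
  have : m12 ^+ 2 <= 0 by rewrite mul0r in hd.
  move=> h0; have : m12 ^+ 2 == 0 by rewrite eq_le h0 sqr_ge0.
  rewrite sqrf_eq0 => /eqP ->. have := sqr_ge0 Y; nra.
have h11' : 0 < m11 by rewrite lt_neqAle eq_sym h h11.
have E : m11 * (m11 * X^+2 - 2 * m12 * X * Y + m22 * Y^+2) = (m11 * X - m12 * Y)^+2 + (m11 * m22 - m12^+2) * Y^+2 by ring.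
have : 0 <= m11 * (m11 * X^+2 - 2 * m12 * X * Y + m22 * Y^+2).
  rewrite E; apply: addr_ge0; first exact: sqr_ge0.
  by apply: mulr_ge0; [rewrite subr_ge0|exact: sqr_ge0].
by rewrite pmulr_rge0.
Qed.

Lemma step3 (R : realFieldType) (e f A B X Y : R) : 0 <= e -> 0 <= f -> 0 < A -> 0 < B ->
  e^+2*A*(X*Y - X^+2) + f^+2*B*(X*Y - Y^+2) <=
  4^-1*X^+2*e^+2*A*(1-B/A)^+2 + X^+2*B*(f-e)^+2 + 4^-1*Y^+2*f^+2*B*(1-A/B)^+2 + Y^+2*A*(e-f)^+2.
Proof.
move=> he hf hA hB.
set L1 := e^+2*((A-B)^+2+4*A^+2)+4*A*B*(f-e)^+2.
set L2 := f^+2*((A-B)^+2+4*B^+2)+4*A*B*(f-e)^+2.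
have hL1 : 0 <= L1.
  apply: addr_ge0; [apply: mulr_ge0; [exact: sqr_ge0| apply: addr_ge0; [exact: sqr_ge0| apply: mulr_ge0 => //; exact: sqr_ge0]] | apply: mulr_ge0; [apply: mulr_ge0; [apply: mulr_ge0 => //; exact: ltW|exact: ltW]|exact: sqr_ge0]].
have hL2 : 0 <= L2.
  apply: addr_ge0; [apply: mulr_ge0; [exact: sqr_ge0| apply: addr_ge0; [exact: sqr_ge0| apply: mulr_ge0 => //; exact: sqr_ge0]] | apply: mulr_ge0; [apply: mulr_ge0; [apply: mulr_ge0 => //; exact: ltW|exact: ltW]|exact: sqr_ge0]].
have hD := @D_ge0 R e f A B he hf (ltW hA) (ltW hB).
have Q := @quad_ge0 R _ (2*A*B*(e^+2*A+f^+2*B)) _ X Y (mulr_ge0 (ltW hB) hL1) (mulr_ge0 (ltW hA) hL2)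
   (_ : (2*A*B*(e^+2*A+f^+2*B))^+2 <= (B*L1)*(A*L2)).
have E : 4*A*B*(4^-1*X^+2*e^+2*A*(1-B/A)^+2 + X^+2*B*(f-e)^+2 + 4^-1*Y^+2*f^+2*B*(1-A/B)^+2 + Y^+2*A*(e-f)^+2
   - (e^+2*A*(X*Y - X^+2) + f^+2*B*(X*Y - Y^+2)))
   = B*L1 * X^+2 - 2 * (2*A*B*(e^+2*A+f^+2*B)) * X * Y + A*L2 * Y^+2.
  rewrite /L1 /L2; field; rewrite ?gt_eqF //.
rewrite -subr_ge0.
have h4 : 0 < 4*A*B by rewrite !mulr_gt0.
rewrite -(pmulr_rge0 _ h4) E; apply: Q.
rewrite -subr_ge0.
have -> : (B * L1) * (A * L2) - (2*A*B*(e^+2*A+f^+2*B))^+2 = A*B*((e^+2*((A-B)^+2+4*A^+2)+4*A*B*(f-e)^+2)*(f^+2*((A-B)^+2+4*B^+2)+4*A*B*(f-e)^+2)-4*A*B*(e^+2*A+f^+2*B)^+2) by rewrite /L1 /L2; ring.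
by apply: mulr_ge0 => //; apply: mulr_ge0; apply: ltW.
Qed.

Section PW.
Variable R : realType.
Implicit Types (X Y p : R).

Lemma powR_split X p : 0 <= X -> 2 <= p -> X `^ p = X `^ (p - 2) * X ^+ 2.
Proof.
move=> X0 p2.
have -> : X ^+ 2 = X `^ 2 by rewrite -powR_mulrn.
rewrite -powRD; first by rewrite subrK.
by apply/implyP; rewrite subrK => /eqP p0; move: p2; rewrite p0; lra.
Qed.

Lemma powR_half X p : 0 <= X -> 2 <= p -> X `^ p = (X `^ (p / 2)) ^+ 2.
Proof.
move=> X0 p2; rewrite expr2 -powRD.
  by congr (_ `^ _); field.
apply/implyP => /eqP h; exfalso; move: h p2; lra.
Qed.

Lemma young_p X Y p : 0 <= X -> 0 <= Y -> 2 <= p ->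
  p * X `^ (p - 2) * (X * Y) <= 2 * (X `^ (p / 2) * Y `^ (p / 2)) + (p - 2) * X `^ p.
Proof.
move=> X0 Y0 p2.
have [->|p2'] := eqVneq p 2.
  rewrite subrr powRr0 mulr1 mul0r addr0 divff ?powRr1 //; lra.
have pg : 2 < p by rewrite lt_neqAle eq_sym p2' p2.
have p20 : 0 < p - 2 by rewrite subr_gt0.
have p0 : 0 < p by lra.
have := @conjugate_powR R (X * Y) (X `^ (p - 2)) (p / 2) (p / (p - 2))
  (mulr_ge0 X0 Y0) (powR_ge0 _ _) (divr_gt0 p0 (ltr0Sn _ 1)) (divr_gt0 p0 p20).
rewrite !invf_div.
have -> : 2 / p + (p - 2) / p = 1 by field; lra.
move=> /(_ erefl).
rewrite powRM // -powRrM.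
have -> : (p - 2) * (p / (p - 2)) = p by field; lra.
move=> H.
have H' := ler_wpM2l (ltW p0) H.
have E1 : p * (X * Y * X `^ (p - 2)) = p * X `^ (p - 2) * (X * Y) by ring.
rewrite E1 in H'; apply: (le_trans H') => {H H' E1}.
set a := X `^ (p / 2) * Y `^ (p / 2).
rewrite le_eqVlt; apply/orP; left; apply/eqP; field; lra.
Qed.

Lemma half_step (a b p w : R) : 2 <= p -> 0 <= w ->
  2^-1 * p * w * (`|a| `^ (p - 2) * a) * (b - a) <=
  w * (`|a| `^ (p / 2) * `|b| `^ (p / 2) - (`|a| `^ (p / 2)) ^+ 2).
Proof.
move=> p2 w0.
have Y := @young_p `|a| `|b| p (normr_ge0 a) (normr_ge0 b) p2.
have Sp := @powR_split `|a| p (normr_ge0 a) p2.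
have Hh := @powR_half `|a| p (normr_ge0 a) p2.
have m0 : 0 <= `|a| `^ (p - 2) := powR_ge0 _ _.
have ab : a * b <= `|a| * `|b| by rewrite -normrM ler_norm.
have aa : a * a = `|a| ^+ 2 by rewrite real_normK ?num_real // expr2.
have E : 2^-1 * p * w * (`|a| `^ (p - 2) * a) * (b - a) =
   2^-1 * w * (p * `|a| `^ (p - 2) * (a * b) - p * (`|a| `^ (p - 2) * (a * a))) by ring.
rewrite E aa -Sp -Hh.
have p0 : 0 <= p by lra.
have : p * `|a| `^ (p - 2) * (a * b) <= p * `|a| `^ (p - 2) * (`|a| * `|b|).
  by apply: ler_wpM2l => //; apply: mulr_ge0.
move: Y; set Z := `|a| `^ (p / 2) * `|b| `^ (p / 2); set W := `|a| `^ p; move=> Y H2.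
have w2 : 0 <= 2^-1 * w by apply: mulr_ge0 => //; rewrite invr_ge0.
suff : p * `|a| `^ (p - 2) * (a * b) - p * W <= 2 * (Z - W).
  move=> H; have := ler_wpM2l w2 H.
  have -> : 2^-1 * w * (2 * (Z - W)) = w * (Z - W) by field.
  done.
lra.
Qed.
End PW.
Arguments half_step {R}.
Arguments powR_half {R}.
Arguments young_p {R}.
Arguments powR_split {R}.
Arguments step3 {R}.

Definition Kp (R : realType) (a b e f c d p : R) : R :=
  2^-1 * p * (e^+2 * expR c) * (`|a| `^ (p-2) * a) * (b - a)
   - 4^-1 * `|a| `^ p * e^+2 * expR c * (1 - expR (d - c))^+2 - `|a| `^ p * expR d * (f - e)^+2.
Arguments Kp {R}.

Lemma pair_ineq (R : realType) (a b e f c d p : R) : 0 <= e -> 0 <= f -> 2 <= p ->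
  Kp a b e f c d p + Kp b a f e d c p <= 0.
Proof.
move=> he hf p2.
have hA := expR_gt0 c; have hB := expR_gt0 d.
have h1 := half_step a b p _ p2 (mulr_ge0 (sqr_ge0 e) (ltW hA)).
have h2 := half_step b a p _ p2 (mulr_ge0 (sqr_ge0 f) (ltW hB)).
have H3 := step3 e f _ _ (`|a| `^ (p / 2)) (`|b| `^ (p / 2)) he hf hA hB.
have Ha := powR_half _ p (normr_ge0 a) p2.
have Hb := powR_half _ p (normr_ge0 b) p2.
rewrite /Kp !expRB Ha Hb.
move: h1 h2 H3.
set X := `|a| `^ (p / 2); set Y := `|b| `^ (p / 2).
set A := expR c; set B := expR d.
set T1 := 2^-1 * p * (e^+2 * A) * (`|a| `^ (p-2) * a) * (b - a).
set T2 := 2^-1 * p * (f^+2 * B) * (`|b| `^ (p-2) * b) * (a - b).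
move=> h1 h2 H3.
have E : e ^+ 2 * A * (X * Y - X ^+ 2) + f ^+ 2 * B * (X * Y - Y ^+ 2) =
   e ^+ 2 * A * (X * Y - X ^+ 2) + f ^+ 2 * B * (Y * X - Y ^+ 2) by rewrite (mulrC Y).
rewrite E in H3.
have F : 4^-1 * X ^+ 2 * e ^+ 2 * A * (1 - B / A) ^+ 2 + X ^+ 2 * B * (f - e) ^+ 2 +
      4^-1 * Y ^+ 2 * f ^+ 2 * B * (1 - A / B) ^+ 2 + Y ^+ 2 * A * (e - f) ^+ 2 =
   4^-1 * X ^+ 2 * e ^+ 2 * A * (1 - B / A) ^+ 2 + X ^+ 2 * B * (f - e) ^+ 2 +
     (4^-1 * Y ^+ 2 * f ^+ 2 * B * (1 - A / B) ^+ 2 + Y ^+ 2 * A * (e - f) ^+ 2) by ring.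
rewrite F in H3.
lra.
Qed.

Lemma fsum_seq (R : realType) (T : choiceType) (r : seq T) (f : T -> R) :
  uniq r -> (forall x, f x != 0 -> x \in r) ->
  \sum_(x \in [set: T]) f x = \sum_(x <- r) f x.
Proof.
move=> ur fr; rewrite (fsbigE r) //.
- by apply: eq_bigl => i; rewrite in_setT.
- by move=> i _ ni; apply/eqP/negPn/negP => /fr; rewrite (negbTE ni).
Qed.

Lemma sum_neq0 (R : realType) (T : eqType) (r : seq T) (f : T -> R) :
  \sum_(x <- r) f x != 0 -> exists2 x, x \in r & f x != 0.
Proof.
move=> H; case: (boolP (has (fun x => f x != 0) r)) => [/hasP [x xr fx]|/hasPn H2].
  by exists x.
exfalso; move/negP: H; apply; rewrite big1_seq // => i /andP [_ ir].
by apply/eqP/negPn; apply: H2.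
Qed.

Theorem proposition4p3 (R : realType) (T : countType)
  (omega : T -> T -> R) (mu : T -> R) (V u eta xi : T -> R) (p : R) :
  weighted_graph omega mu ->
  infinite_set [set: T] ->
  connected_graph omega ->
  locally_finite omega ->
  (forall x, laplacian omega mu u x - V x * u x = 0) ->
  (forall x, 0 <= eta x) ->
  finite_set [set x | eta x != 0] ->
  (forall x y, adj omega x y ->
     0 <= (eta y ^+ 2 - eta x ^+ 2) * (expR (xi y) - expR (xi x))) ->
  2 <= p ->
  2^-1 * \sum_(x \in [set: T])
     (`|u x| `^ p * eta x ^+ 2 * expR (xi x) *
       (V x * p * mu x
        - 2^-1 * \sum_(y \in [set: T]) omega x y * (1 - expR (xi y - xi x)) ^+ 2))
  <= \sum_(x \in [set: T]) \sum_(y \in [set: T])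
       `|u x| `^ p * expR (xi y) * (eta y - eta x) ^+ 2 * omega x y.
Proof.
move=> [hmu [hw [hsym hdiag]]] _ _ hlf hlap heta hfin _ hp.
pose S0 := [set x | eta x != 0].
pose N := \bigcup_(x in S0) [set y | adj omega x y].
have finN : finite_set N := bigcup_finite hfin (fun x _ => hlf x).
have finF : finite_set (S0 `|` N) by rewrite finite_setU.
pose r : seq T := finmap.enum_fset (fset_set (S0 `|` N)).
have ur : uniq r := finmap.fset_uniq (fset_set (S0 `|` N)).
have inr : forall x, (S0 `|` N) x -> x \in r.
  by move=> x hx; rewrite /r in_fset_set // inE.
have inS0 : forall x, eta x != 0 -> x \in r by move=> x hx; apply: inr; left.
have inN : forall x y, eta x != 0 -> omega x y != 0 -> y \in r.
  move=> x y hx hxy; apply: inr; right; exists x; first exact: hx.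
  by rewrite /= /adj lt_neqAle eq_sym hxy hw.
pose Rt x y := `|u x| `^ p * expR (xi y) * (eta y - eta x) ^+ 2 * omega x y.
have Rt_in : forall x y, Rt x y != 0 -> x \in r /\ y \in r.
  move=> x y; rewrite /Rt !mulf_eq0 !negb_or => /andP [/andP [/andP [_ _] hd] hxy].
  have [ex|ex] := eqVneq (eta x) 0.
    have ey : eta y != 0 by move: hd; rewrite ex subr0 => /andP [].
    split; last exact: inS0.
    by apply: (inN y x ey); rewrite hsym.
  by split; [exact: inS0 | exact: (inN x y ex)].
have RHS_eq : \sum_(x \in [set: T]) \sum_(y \in [set: T]) Rt x y
    = \sum_(x <- r) \sum_(y <- r) Rt x y.
  have inner : forall x, \sum_(y \in [set: T]) Rt x y = \sum_(y <- r) Rt x y.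
    by move=> x; apply: fsum_seq => // y /Rt_in [].
  under eq_fsbigr do rewrite inner.
  apply: fsum_seq => // x /sum_neq0 [y _ /Rt_in []] //.
pose A x := expR (xi x).
pose phi x := `|u x| `^ (p - 2) * u x.
pose K x y := omega x y * Kp (u x) (u y) (eta x) (eta y) (xi x) (xi y) p.
pose Lt x := `|u x| `^ p * eta x ^+ 2 * expR (xi x) *
       (V x * p * mu x
        - 2^-1 * \sum_(y \in [set: T]) omega x y * (1 - expR (xi y - xi x)) ^+ 2).
have Lt_r : \sum_(x \in [set: T]) Lt x = \sum_(x <- r) Lt x.
  apply: fsum_seq => // x; rewrite /Lt => hx; apply: inS0; apply: contraNneq hx => ->.
  by rewrite expr0n /= mulr0 !mul0r.
have sphi : forall x, `|u x| `^ p = phi x * u x.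
  move=> x; rewrite /phi powR_split // -mulrA; congr (_ * _).
  by rewrite real_normK ?num_real // expr2.
have Lt_eq : forall x, 2^-1 * Lt x = \sum_(y <- r) K x y + \sum_(y <- r) Rt x y.
  move=> x; rewrite -big_split /=.
  have [ex|ex] := eqVneq (eta x) 0.
    rewrite /Lt ex expr0n /= mulr0 !mul0r mulr0 big1 // => y _.
    by rewrite /K /Rt /Kp ex; ring.
  have lap : \sum_(y <- r) (u y - u x) * omega x y = mu x * (V x * u x).
    have := hlap x; rewrite /laplacian => /eqP; rewrite subr_eq0 => /eqP H.
    have mu0 : mu x != 0 by rewrite gt_eqF.
    have sT : \sum_(y \in [set: T]) (u y - u x) * omega x y = \sum_(y <- r) (u y - u x) * omega x y.
      apply: fsum_seq => // y; rewrite mulf_eq0 negb_or => /andP [_ hy]; exact: inN ex hy.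
    by rewrite -sT -H mulrA mulfV // mul1r.
  have sq : \sum_(y \in [set: T]) omega x y * (1 - expR (xi y - xi x)) ^+ 2
       = \sum_(y <- r) omega x y * (1 - expR (xi y - xi x)) ^+ 2.
    apply: fsum_seq => // y; rewrite mulf_eq0 negb_or => /andP [hy _]; exact: inN ex hy.
  rewrite /Lt sq sphi.
  have E : \sum_(y <- r) (K x y + Rt x y) =
     2^-1 * p * (eta x ^+ 2 * expR (xi x)) * phi x * \sum_(y <- r) (u y - u x) * omega x y
     - 4^-1 * (phi x * u x) * eta x ^+ 2 * expR (xi x) * \sum_(y <- r) omega x y * (1 - expR (xi y - xi x)) ^+ 2.
    rewrite !mulr_sumr -sumrB; apply: eq_bigr => y _.
    rewrite /K /Rt /Kp sphi /phi.
    move: (`|u x| `^ (p - 2)) (expR (xi x)) (expR (xi y)) (expR (xi y - xi x)) => a1 a2 a3 a4.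
    ring.
  rewrite E lap.
  move: (phi x) (expR (xi x)) (\sum_(y <- r) omega x y * (1 - expR (xi y - xi x)) ^+ 2) => a1 a2 a3.
  by field; rewrite ?pnatr_eq0.
have KK : \sum_(x <- r) \sum_(y <- r) K x y <= 0.
  have exb : \sum_(x <- r) \sum_(y <- r) K x y = \sum_(x <- r) \sum_(y <- r) K y x.
    by rewrite exchange_big.
  have H : 0 <= \sum_(x <- r) \sum_(y <- r) - (K x y + K y x).
    apply: sumr_ge0 => x _; apply: sumr_ge0 => y _; rewrite oppr_ge0.
    rewrite /K (hsym y x) -mulrDr; apply: mulr_ge0_le0; first exact: hw.
    exact: pair_ineq.
  have E2 : \sum_(x <- r) \sum_(y <- r) - (K x y + K y x) =
     - (\sum_(x <- r) \sum_(y <- r) K x y + \sum_(x <- r) \sum_(y <- r) K y x).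
    rewrite opprD -!sumrN -big_split /=; apply: eq_bigr => x _.
    rewrite -!sumrN -big_split /=; apply: eq_bigr => y _.
    by rewrite opprD.
  move: H; rewrite E2 -exb oppr_ge0; lra.
rewrite RHS_eq.
have -> : 2^-1 * \sum_(x \in [set: T]) Lt x = \sum_(x <- r) \sum_(y <- r) K x y + \sum_(x <- r) \sum_(y <- r) Rt x y.
  rewrite Lt_r mulr_sumr -big_split /=; apply: eq_bigr => x _; exact: Lt_eq.
lra.
Qed.
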